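(* Let $\mathbf d=(d_1,\ldots,d_n)$ be a degree sequence and $g_n$ as defined below. Then for every $v\in[n]$ and every integer $k$ with $2\le k\le n-2$, \[\frac{n-k}{n-k+(k+1)d_v}\,g_n(k+1)\ \le\ \mathbb P(\mathfrak s_n(v)>k)\ \le\ \frac{n-k+1}{n-k+1+k d_v}\,g_n(k).\]
   Context: A degree sequence is $\mathbf d=(d_1,\ldots,d_n)\in\mathbb N_0^n$ with $\sum_j d_j=n$. Let $\mathfrak F(\mathbf d)=\{f:[n]\to[n]: |f^{-1}(\{i\})|=d_i\ \forall i\}$ and let $F$ be uniform on $\mathfrak F(\mathbf d)$. The six-length is $\mathfrak s_f(v)=\min\{k\in\mathbb N: f^{(k)}(v)\in\{f^{(j)}(v):0\le j\le k-1\}\}$ ($f^{(k)}$ the $k$-fold composition, $f^{(0)}=\mathrm{id}$); $\mathfrak s_n(v)=\mathfrak s_F(v)$. $\langle n\rangle_k=n!/(n-k)!$ and $g_n(k)=\frac{k!}{\langle n\rangle_k}\sum_{1\le i_1<\cdots<i_k\le n}\prod_{j=1}^k d_{i_j}$. *)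

(* Defs.v *)
From HB Require Import structures.
From mathcomp Require Import all_boot all_order all_algebra.
Set Implicit Arguments. Unset Strict Implicit. Unset Printing Implicit Defensive.
Import Order.TTheory GRing.Theory Num.Theory.

Definition Fset (n : nat) (d : 'I_n -> nat) : {set {ffun 'I_n -> 'I_n}} :=
  [set f : {ffun 'I_n -> 'I_n} | [forall i, #|[set x | f x == i]| == d i]].

Definition six_pred (n : nat) (f : 'I_n -> 'I_n) (v : 'I_n) (k : nat) : bool :=
  (0 < k) && (iter k f v \in traject f v k).

Lemma six_exists (n : nat) (f : 'I_n -> 'I_n) (v : 'I_n) : exists k, six_pred f v k.
Proof.
exists (order f v); rewrite /six_pred.
apply/andP; split; last exact: (looping_order f v).
exact: order_gt0.
Qed.

Definition sixlen (n : nat) (f : 'I_n -> 'I_n) (v : 'I_n) : nat :=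
  ex_minn (six_exists f v).

Definition prob_six_gt (n : nat) (d : 'I_n -> nat) (v : 'I_n) (k : nat) : rat :=
  (#|[set f in Fset d | k < sixlen f v]|)%:R / (#|Fset d|)%:R.

Definition gn (n : nat) (d : 'I_n -> nat) (k : nat) : rat :=
  (k`!)%:R / (n ^_ k)%:R *
  (\sum_(S : {set 'I_n} | #|S| == k) \prod_(i in S) d i)%:R.

(* Main.v *)
Require Import Defs.
From HB Require Import structures.
From mathcomp Require Import all_boot all_order all_algebra.
From mathcomp Require Import all_fingroup all_solvable.
From mathcomp Require Import ring lra zify.
Import Order.TTheory GRing.Theory Num.Theory.
Set Implicit Arguments. Unset Strict Implicit.

Definition E n (w : 'I_n -> nat) k :=
  (\sum_(S : {set 'I_n} | #|S| == k) \prod_(i in S) w i)%N.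
Definition zw n (w : 'I_n -> nat) v := fun i => if i == v then 0 else w i.

Lemma E_excl n (w : 'I_n -> nat) v m :
  \sum_(S : {set 'I_n} | (#|S| == m) && (v \notin S)) \prod_(i in S) w i = E (zw w v) m.
Proof.
rewrite /E [RHS](bigID (fun S : {set 'I_n} => v \in S)) /=.
rewrite [X in _ = X + _]big1 ?add0n; last first.
  by move=> S /andP[_ vS]; rewrite (bigD1 v) // /zw /= eqxx mul0n.
apply: eq_bigr => S /andP[_ vS]; apply: eq_bigr => i iS; rewrite /zw.
by case: eqP => // eiv; move: iS; rewrite eiv (negbTE vS).
Qed.

Lemma Ecore n (w : 'I_n -> nat) v m :
  \sum_(S : {set 'I_n} | (#|S| == m.+1) && (v \in S)) \prod_(i in S) w i =
  w v * \sum_(S : {set 'I_n} | (#|S| == m) && (v \notin S)) \prod_(i in S) w i.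
Proof.
rewrite big_distrr /=.
rewrite (reindex_onto (fun S => v |: S) (fun S => S :\ v)) /=; last first.
  by move=> S /andP[_ vS]; rewrite setD1K.
apply: eq_big => [S|S /andP[_ /eqP h]]; last first.
  have vS : v \notin S by apply/negP => vS; move/setP: h => /(_ v); rewrite !inE eqxx vS.
  by rewrite big_setU1.
case: (boolP (v \in S)) => vS /=.
  rewrite andbF; apply/negbTE/andP => -[_ /eqP h].
  by have := vS; rewrite -h !inE eqxx.
by rewrite setU1K // eqxx cardsU1 vS setU11 add1n eqSS !andbT.
Qed.

Lemma E_split n (w : 'I_n -> nat) v m :
  E w m.+1 = E (zw w v) m.+1 + w v * E (zw w v) m.
Proof.
rewrite {1}/E (bigID (fun S : {set 'I_n} => v \in S)) /= addnC.
by rewrite E_excl Ecore E_excl.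
Qed.

Lemma E_deriv n (w : 'I_n -> nat) m :
  m.+1 * E w m.+1 = \sum_i w i * E (zw w i) m.
Proof.
rewrite /E big_distrr /=.
transitivity (\sum_(S : {set 'I_n} | #|S| == m.+1) \sum_(i in S) \prod_(j in S) w j).
  by apply: eq_bigr => S /eqP cS; rewrite sum_nat_const cS.
rewrite (exchange_big_dep predT) //=; apply: eq_bigr => i _.
by rewrite Ecore E_excl.
Qed.

Lemma E_newton n (w : 'I_n -> nat) m :
  m.+2 * E w m.+2 + m.+1 * E w m.+1 <= (\sum_i w i) * E w m.+1.
Proof.
rewrite big_distrl /= (eq_bigr (fun i => w i * E (zw w i) m.+1 + w i * w i * E (zw w i) m)); last first.
  by move=> i _; rewrite (E_split w i) mulnDr mulnA.
rewrite big_split /= E_deriv (E_deriv w m) leq_add2l.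
apply: leq_sum => i _; apply: leq_mul => //.
by case: (w i) => // x; rewrite leq_pmull.
Qed.

Definition Cnt n (d : 'I_n -> nat) m (a y : 'I_m -> 'I_n) :=
  #|[set f in Fset d | [forall j, f (a j) == y j]]|.

Lemma Cnt_perm n (d : 'I_n -> nat) m (s : {perm 'I_n}) (a a' y : 'I_m -> 'I_n) :
  (forall j, a' j = s (a j)) -> Cnt d a' y <= Cnt d a y.
Proof.
move=> ha.
pose g (f : {ffun 'I_n -> 'I_n}) := [ffun x => f (s x)].
have ginj : injective g.
  move=> f1 f2 e; apply/ffunP => x.
  by have := congr1 (fun h : {ffun _ -> _} => h ((s^-1)%g x)) e; rewrite !ffunE permKV.
rewrite /Cnt -(card_imset _ ginj); apply: subset_leq_card.
apply/subsetP => _ /imsetP[f fA ->]; move: fA; rewrite !inE => /andP[fF /forallP fa].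
apply/andP; split.
  apply/forallP => i; move/forallP: fF => /(_ i) /eqP <-.
  rewrite (_ : [set x | g f x == i] = s @^-1: [set x | f x == i]).
    by rewrite card_preimset //; apply: perm_inj.
  by apply/setP => x; rewrite !inE ffunE.
by apply/forallP => j; rewrite ffunE -ha.
Qed.

Lemma exists_perm n m (a a' : 'I_m -> 'I_n) :
  injective a -> injective a' -> exists s : {perm 'I_n}, forall j, a' j = s (a j).
Proof.
move=> ia ia'.
have mn : m <= #|'I_n| by rewrite -{1}(card_ord m); exact: leq_card ia.
have tr := ntransitive_weak mn (Sym_trans 'I_n).
pose t := [tuple a j | j < m]; pose t' := [tuple a' j | j < m].
have dt : t \in m.-dtuple(setT).
  by apply/dtuple_onP; split => [i j|i]; rewrite ?inE // !tnth_mktuple => /ia.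
have dt' : t' \in m.-dtuple(setT).
  by apply/dtuple_onP; split => [i j|i]; rewrite ?inE // !tnth_mktuple => /ia'.
have [s _ e] := atransP2 tr dt dt'.
exists s => j; have := congr1 (fun u : m.-tuple 'I_n => tnth u j) e.
by rewrite /= /t /t' /n_act !tnth_map !tnth_ord_tuple.
Qed.

Lemma Cnt_inj n (d : 'I_n -> nat) m (a a' y : 'I_m -> 'I_n) :
  injective a -> injective a' -> Cnt d a y = Cnt d a' y.
Proof.
move=> ia ia'; have [s hs] := exists_perm ia ia'.
apply/eqP; rewrite eqn_leq; apply/andP; split; last exact: Cnt_perm hs.
apply: (@Cnt_perm _ _ _ (s^-1)%g a' a y) => j; by rewrite hs permK.
Qed.

Lemma card_set_sum (T : finType) (A : {set T}) (P : pred T) :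
  #|[set x in A | P x]| = \sum_(x in A) P x.
Proof.
rewrite -sum1_card [LHS]big_mkcond [RHS]big_mkcond /=.
apply: eq_bigr => x _; rewrite !inE; by case: (x \in A); case: (P x).
Qed.

Lemma sum_Cnt n (d : 'I_n -> nat) m (y : 'I_m -> 'I_n) : injective y ->
  \sum_(a : {ffun 'I_m -> 'I_n} | injectiveb a) Cnt d a y =
  #|Fset d| * \prod_j d (y j).
Proof.
move=> iy; rewrite /Cnt.
rewrite (eq_bigr (fun a : {ffun 'I_m -> 'I_n} => \sum_(f in Fset d) ([forall j, f (a j) == y j] : nat))); last by move=> a _; rewrite card_set_sum.
rewrite exchange_big /= -sum1_card big_distrl /=; apply: eq_bigr => f.
rewrite inE => /forallP fF; rewrite mul1n.
transitivity #|(family (fun j => [pred x | f x == y j]) : simpl_pred {ffun 'I_m -> 'I_n})|.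
  rewrite -sum1_card [RHS]big_mkcond /= big_mkcond /=; apply: eq_bigr => a _.
  case: (boolP (a \in family _)) => [/familyP ha | nha].
    have fa : forall j, f (a j) = y j by move=> j; have := ha j; rewrite inE => /eqP.
    have -> : injectiveb a.
      by apply/injectiveP => i j e; apply: iy; rewrite -!fa e.
    by have -> : [forall j, f (a j) == y j] by apply/forallP => j; rewrite fa.
  case: (injectiveb a) => //=; case: forallP => //= ha; case/negP: nha.
  by apply/familyP => j; rewrite inE; apply: ha.
rewrite card_family foldrE big_map big_enum /=; apply: eq_bigr => j _.
by have /eqP <- := fF (y j); apply: eq_card => x; rewrite !inE.
Qed.

Lemma Cnt_formula n (d : 'I_n -> nat) m (a y : 'I_m -> 'I_n) :
  injective a -> injective y ->
  n ^_ m * Cnt d a y = #|Fset d| * \prod_j d (y j).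
Proof.
move=> ia iy; rewrite -sum_Cnt //.
rewrite -{1}(card_ord n) -{1}(card_ord m) -card_inj_ffuns -sum1_card big_distrl /=.
apply: eq_big => [b|b]; first by rewrite inE.
rewrite inE mul1n => /injectiveP ib; exact: Cnt_inj.
Qed.

Definition tr n (f : {ffun 'I_n -> 'I_n}) (v : 'I_n) k : {ffun 'I_k -> 'I_n} :=
  [ffun j : 'I_k => iter j.+1 f v].
Definition ay n k (v : 'I_n) (y : {ffun 'I_k -> 'I_n}) (j : 'I_k) :=
  nth v (v :: codom y) j.

Lemma nth_codom_ord k (T : eqType) (y : {ffun 'I_k -> T}) x0 (j : 'I_k) :
  nth x0 (codom y) j = y j.
Proof.
rewrite codomE (nth_map j) ?size_enum_ord //; congr (y _); apply: val_inj.
by rewrite /= nth_enum_ord.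
Qed.

Lemma traj_tr n (f : {ffun 'I_n -> 'I_n}) v k :
  traject f v k.+1 = v :: codom (tr f v k).
Proof.
apply: (@eq_from_nth _ v); first by rewrite /= size_traject size_codom card_ord.
move=> i; rewrite size_traject => hi; rewrite nth_traject //.
case: i hi => [|i] hi //=; rewrite ltnS in hi.
by rewrite -[i]/(nat_of_ord (Ordinal hi)) nth_codom_ord ffunE.
Qed.

Lemma trK n (f : {ffun 'I_n -> 'I_n}) v k (y : {ffun 'I_k -> 'I_n}) :
  (tr f v k == y) = [forall j, f (ay v y j) == y j].
Proof.
apply/eqP/forallP.
  move=> <- [[|i] hi]; rewrite /ay /=; first by rewrite ffunE.
  have h' : i < k := ltnW hi.
  by rewrite -[i]/(nat_of_ord (Ordinal h')) nth_codom_ord !ffunE.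
move=> h; apply/ffunP => -[j hj]; rewrite ffunE /=.
elim: j hj => [|j IH] hj.
  by have := h (Ordinal hj); rewrite /ay /= => /eqP.
have h' : j < k := ltnW hj.
rewrite iterS (IH h'); have := h (Ordinal hj); rewrite /ay /=.
by rewrite -[j]/(nat_of_ord (Ordinal h')) nth_codom_ord => /eqP.
Qed.

Lemma ay_inj n k (v : 'I_n) (y : {ffun 'I_k -> 'I_n}) :
  uniq (v :: codom y) -> injective (ay v y).
Proof.
move=> u i j e; apply: val_inj; apply/eqP.
have hs : size (v :: codom y) = k.+1 by rewrite /= size_codom card_ord.
rewrite -(nth_uniq v _ _ u); first exact/eqP.
  by rewrite hs ltnS; exact: ltnW (ltn_ord i).
by rewrite hs ltnS; exact: ltnW (ltn_ord j).
Qed.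

Lemma codom_inj k (T : finType) (y : {ffun 'I_k -> T}) :
  uniq (codom y) -> injective y.
Proof. by move=> u; apply/injectiveP; rewrite /injectiveb /dinjectiveb -codomE. Qed.

Lemma uniq_six n (f : {ffun 'I_n -> 'I_n}) v m :
  uniq (traject f v m.+1) <-> (forall j, j <= m -> ~~ six_pred f v j).
Proof.
elim: m => [|m IH].
  by split => // _ [|j].
rewrite trajectSr rcons_uniq; split.
  move=> /andP[h1 /IH h2] j; rewrite leq_eqVlt ltnS => /orP[/eqP -> | /h2] //.
move=> h; apply/andP; split; last by apply/IH => j hj; apply: h; exact: leqW hj.
by have := h m.+1 (leqnn _); rewrite /six_pred.
Qed.

Lemma sixlen_uniq n (f : {ffun 'I_n -> 'I_n}) v k :
  (k < sixlen f v) = uniq (traject f v k.+1).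
Proof.
rewrite /sixlen; case: ex_minnP => s hs hmin.
apply/idP/idP.
  move=> ks; apply/uniq_six => j jk; apply/negP => hj.
  by have := hmin j hj; rewrite leqNgt (leq_ltn_trans jk ks).
move/uniq_six => h; rewrite ltnNge; apply/negP => sk.
by have := h s sk; rewrite hs.
Qed.

Lemma count_event n (d : 'I_n -> nat) v k :
  n ^_ k * #|[set f in Fset d | k < sixlen f v]| =
  #|Fset d| * \sum_(y : {ffun 'I_k -> 'I_n} | uniq (v :: codom y)) \prod_j d (y j).
Proof.
transitivity (n ^_ k * \sum_(f | (f \in Fset d) && uniq (traject f v k.+1)) 1).
  by congr (_ * _); rewrite -sum1_card; apply: eq_bigl => f; rewrite inE sixlen_uniq.
rewrite (partition_big (fun f => tr f v k) (fun y => uniq (v :: codom y))); last first.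
  by move=> f /andP[_]; rewrite traj_tr.
rewrite big_distrr big_distrr /=; apply: eq_bigr => y uy.
have iy : injective y by apply: codom_inj; case/andP: uy.
rewrite -(Cnt_formula d (ay_inj uy) iy).
congr (_ * _); rewrite sum1_card /Cnt; apply: eq_card => f.
rewrite [in RHS]inE -trK /in_mem /=.
case: (tr f v k =P y) => [e|_]; last by rewrite !andbF.
have := traj_tr f v k; rewrite trajectS => -[->]; rewrite e.
by move: uy => /= /andP[-> ->]; rewrite !andbT.
Qed.

Lemma bridge n (w : 'I_n -> nat) k :
  \sum_(y : {ffun 'I_k -> 'I_n} | injectiveb y) \prod_j w (y j) = k`! * E w k.
Proof.
rewrite (partition_big (fun y : {ffun 'I_k -> 'I_n} => y @: [set: 'I_k]) (fun S => #|S| == k)); last first.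
  by move=> y /injectiveP iy; rewrite card_imset // cardsT card_ord.
rewrite /E big_distrr /=; apply: eq_bigr => S /eqP cS.
transitivity (\sum_(y : {ffun 'I_k -> 'I_n} | injectiveb y && (y @: [set: 'I_k] == S)) \prod_(i in S) w i).
  apply: eq_bigr => y /andP[/injectiveP iy /eqP <-]; rewrite big_imset /=; last by move=> i j _ _; apply: iy.
  by apply: eq_bigl => j; rewrite inE.
rewrite sum_nat_const; congr (_ * _).
transitivity #|[set y : {ffun 'I_k -> 'I_n} in ffun_on (fun x => x \in S) | injectiveb y]|.
  apply: eq_card => y; rewrite [in RHS]inE /in_mem /=.
  case: (boolP (injectiveb y)) => [iy'|]; last by rewrite andbF.
  have iy : injective y by apply/injectiveP.
  rewrite andbT /=; apply/eqP/ffun_onP => [<- j | h]; first by rewrite imset_f ?inE.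
  apply/eqP; rewrite eqEcard card_imset // cardsT card_ord cS leqnn andbT.
  by apply/subsetP => _ /imsetP[j _ ->]; exact: h.
rewrite card_inj_ffuns_on card_ord -ffactnn -[X in _ = X ^_ _]cS.
by congr (_ ^_ _); apply: eq_card.
Qed.

Lemma Fset_ne n (d : 'I_n -> nat) (x0 : 'I_n) : (\sum_i d i = n)%N -> (0 < #|Fset d|)%N.
Proof.
move=> hd.
pose s := flatten [seq nseq (d i) i | i <- enum 'I_n].
have ss : size s = n.
  rewrite size_flatten /shape -map_comp sumnE big_map big_enum /= -[RHS]hd.
  by apply: eq_bigr => i _; rewrite size_nseq.
pose f := [ffun x : 'I_n => nth x0 s x].
apply/card_gt0P; exists f; rewrite inE; apply/forallP => i.
have -> : #|[set x | f x == i]| = count (pred1 i) s.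
  rewrite -sum1_count (big_nth x0) ss big_mkord -sum1_card.
  by apply: eq_bigl => x; rewrite !inE ffunE.
rewrite count_flatten sumnE -map_comp big_map big_enum /=.
rewrite (bigD1 i) //= big1 ?addn0; first by rewrite count_nseq /= eqxx mul1n.
by move=> j /negbTE ji; rewrite count_nseq /= ji.
Qed.

Lemma excl_sum n (d : 'I_n -> nat) v k :
  \sum_(y : {ffun 'I_k -> 'I_n} | uniq (v :: codom y)) \prod_j d (y j) =
  \sum_(y : {ffun 'I_k -> 'I_n} | injectiveb y) \prod_j zw d v (y j).
Proof.
rewrite [RHS](bigID (fun y : {ffun 'I_k -> 'I_n} => v \in codom y)) /=.
rewrite [X in _ = X + _]big1 ?add0n; last first.
  move=> y /andP[_ /codomP[j e]].
  by rewrite (bigD1 j) // /zw /= -e eqxx mul0n.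
apply: eq_big => [y|y uy].
  by rewrite /= andbC /injectiveb /dinjectiveb -codomE.
apply: eq_bigr => j _; rewrite /zw; case: eqP => // e.
by move: uy; rewrite /= -e codom_f.
Qed.

Local Open Scope ring_scope.

Lemma frac_le (a b c e : nat) : (0 < b)%N -> (0 < e)%N -> (a * e <= c * b)%N ->
  (a%:R / b%:R : rat) <= c%:R / e%:R.
Proof.
move=> b0 e0 h; rewrite ler_pdivrMr ?ltr0n // mulrAC ler_pdivlMr ?ltr0n //.
by rewrite -!natrM ler_nat.
Qed.

Lemma frac_eq (a b c e : nat) : (0 < b)%N -> (0 < e)%N -> (a * e = c * b)%N ->
  (a%:R / b%:R : rat) = c%:R / e%:R.
Proof.
move=> b0 e0 h; apply/eqP; rewrite eqr_div ?pnatr_eq0 -?lt0n //.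
by rewrite -!natrM h.
Qed.

Unset Implicit Arguments.
Local Open Scope ring_scope.

Theorem mainTheorem6 (n : nat) (d : 'I_n -> nat)
  (hd : (\sum_(i < n) d i)%N = n) (v : 'I_n) (k : nat)
  (hk2 : (2 <= k)%N) (hkn : (k <= n - 2)%N) :
  ((n - k)%N)%:R / (((n - k)%N)%:R + (k.+1)%:R * (d v)%:R) * gn d k.+1
    <= prob_six_gt d v k /\
  prob_six_gt d v k
    <= ((n - k).+1)%:R / (((n - k).+1)%:R + k%:R * (d v)%:R) * gn d k.
Proof.
have N0 := Fset_ne v hd.
have hc := count_event d v k; rewrite excl_sum bridge in hc.
set N := #|Fset d| in N0 hc *.
set c := #|[set f in Fset d | (k < sixlen f v)%N]| in hc.
set d' := zw d v in hc.
have hkn' : (k <= n)%N by lia.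
have F0 : (0 < n ^_ k)%N by rewrite ffact_gt0.
have hW : (\sum_i d' i <= n)%N.
  by rewrite -[X in (_ <= X)%N]hd; apply: leq_sum => i _; rewrite /d' /zw; case: eqP.
have hp : prob_six_gt d v k = (k`! * E d' k)%:R / (n ^_ k)%:R.
  by rewrite /prob_six_gt; apply: frac_eq => //; rewrite mulnC hc mulnC.
rewrite hp; clear hp hc c.
case: k hk2 hkn hkn' F0 => [|[|k']] //= _ hkn hkn' F0.
have N1 := E_newton d' k'; have N2 := E_newton d' k'.+1.
have hs1 := E_split d v k'.+1; have hs2 := E_split d v k'.+2.
rewrite -/d' in hs1 hs2.
have N1' := leq_trans N1 (leq_mul hW (leqnn _)).
have N2' := leq_trans N2 (leq_mul hW (leqnn _)).
move: N1' N2' hs1 hs2 hkn hkn'.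
set e0 := E d' k'.+1; set e1 := E d' k'.+2; set e2 := E d' k'.+3.
move=> N1' N2' hs1 hs2 hkn hkn'.
set D := d v.
have gnE m : gn d m = (m`!)%:R / (n ^_ m)%:R * (E d m)%:R by [].
have hk2n : (k'.+2 <= n)%N by lia.
have B0 : (0 < n - k'.+2)%N by lia.
set B := (n - k'.+2)%N in B0 *.
set fk := (k'.+2)`!.
set F := n ^_ k'.+2 in F0 *.
have eB : B = (n - k'.+2)%N by [].
have hfact : (k'.+2)`! = fk by [].
have hF : n ^_ k'.+2 = F by [].
clearbody B fk F.
rewrite !gnE (ffactnSr n k'.+2) (factS k'.+2) hs2 hs1 hfact hF -eB.
set k3 := k'.+3 in N2 N2' *; set k2 := k'.+2 in N1' N2' N1 N2 hkn hkn' hk2n eB *.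
have ek3 : k3 = k'.+3 by []. have ek2 : k2 = k'.+2 by [].
clearbody k3 k2.
split.
-   have -> : (B%:R / (B%:R + k3%:R * D%:R) * ((k3 * fk)%:R / (F * B)%:R * (e2 + D * e1)%:R) : rat)
    = (B * (k3 * fk * (e2 + D * e1)))%:R / ((B + k3 * D) * (F * B))%:R.
    rewrite !natrM !natrD; field.
    by rewrite -natrM -natrD !pnatr_eq0 -!lt0n ?B0 ?F0 ?addn_gt0 ?B0.
  apply: frac_le => //; first by rewrite !muln_gt0 B0 F0 addn_gt0 B0.
  have key : (k3 * e2 <= B * e1)%N.
    rewrite eB mulnBl; lia.
  have -> : (B * (k3 * fk * (e2 + D * e1)) * F = fk * F * B * (k3 * e2 + k3 * D * e1))%N by ring.
  have -> : (fk * e1 * ((B + k3 * D) * (F * B)) = fk * F * B * (B * e1 + k3 * D * e1))%N by ring.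
  by rewrite leq_mul2l leq_add2r key orbT.
-   have -> : ((B.+1)%:R / ((B.+1)%:R + k2%:R * D%:R) * (fk%:R / F%:R * (e1 + D * e0)%:R) : rat)
    = (B.+1 * (fk * (e1 + D * e0)))%:R / ((B.+1 + k2 * D) * F)%:R.
    rewrite !natrM !natrD; field.
    by rewrite -natrM (addrC 1) natr1 -natrD !pnatr_eq0 -!lt0n F0 addn_gt0.
  apply: frac_le => //; first by rewrite !muln_gt0 F0 addn_gt0.
  have key : (k2 * e1 <= B.+1 * e0)%N.
    have -> : B.+1 = (n - k'.+1)%N by rewrite eB; lia.
    rewrite mulnBl; lia.
  have -> : (fk * e1 * ((B.+1 + k2 * D) * F) = fk * F * (B.+1 * e1 + D * (k2 * e1)))%N by ring.
  have -> : (B.+1 * (fk * (e1 + D * e0)) * F = fk * F * (B.+1 * e1 + D * (B.+1 * e0)))%N by ring.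
  by rewrite leq_mul2l leq_add2l leq_mul2l key !orbT.
Qed.
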